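(* Let $G$ be a Garside group with Garside element $\Delta$, and let $H$ be an abelian subgroup of $G$ all of whose elements are periodic. Then the restriction $\mathrm{INF}|_H: H\to\mathbb Q$ is an injective group homomorphism. In particular, $H$ is cyclic.
   Context: $G$ is a Garside group: the group of fractions of a Garside monoid $G^+$ (an atomic, left and right cancellative monoid that is a lattice under both the prefix order and the suffix order, with a Garside element $\Delta$ whose left and right divisors coincide, form a finite set, and generate $G^+$); some positive power of $\Delta$ is central. For $g,h\in G$, $g\le_L h$ means $g^{-1}h\in G^+$; $\inf(g)=\max\{r\in\mathbb Z:\Delta^r\le_L g\}$ and $\mathrm{INF}(g)=\lim_{n\to\infty}\inf(g^n)/n$ (this limit exists and is rational). An element $g$ is periodic if $g=1$ or $g^k$ is conjugate to $\Delta^\ell$ for some nonzero integers $k,\ell$. *)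

(* Defs.v *)
From HB Require Import structures.
From mathcomp Require Import all_boot all_order all_algebra.
From Stdlib Require Import ClassicalEpsilon.
Set Implicit Arguments. Unset Strict Implicit. Unset Printing Implicit Defensive.
Import Order.TTheory GRing.Theory Num.Theory.

Record Group := {
  gcar :> Type;
  gmul : gcar -> gcar -> gcar;
  gone : gcar;
  ginv : gcar -> gcar;
  gmulA : forall x y z, gmul x (gmul y z) = gmul (gmul x y) z;
  gmul1l : forall x, gmul gone x = x;
  gmul1r : forall x, gmul x gone = x;
  gmulVl : forall x, gmul (ginv x) x = gone;
  gmulVr : forall x, gmul x (ginv x) = gone
}.

Section GroupDefs.
Variable G : Group.
Local Notation "x * y" := (gmul x y).
Local Notation "1" := (gone G).

Definition gprod (s : seq G) : G := foldr (@gmul G) 1 s.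

Definition gpown (g : G) (n : nat) : G := iter n (gmul g) 1.
Definition gpow (g : G) (k : int) : G :=
  match k with
  | Posz n => gpown g n
  | Negz n => ginv (gpown g n.+1)
  end.

Definition prefix (P : G -> Prop) (a b : G) := exists c, P c /\ b = a * c.
Definition suffix (P : G -> Prop) (a b : G) := exists c, P c /\ b = c * a.

Definition is_lattice (P : G -> Prop) (le : G -> G -> Prop) :=
  forall a b, P a -> P b ->
    (exists m, [/\ P m, le m a, le m b &
                forall c, P c -> le c a -> le c b -> le c m]) /\
    (exists j, [/\ P j, le a j, le b j &
                forall c, P c -> le a c -> le b c -> le j c]).

Definition atomic (P : G -> Prop) :=
  forall a, P a -> exists N : nat, forall s : seq G,
    (forall x, List.In x s -> P x /\ x <> 1) -> gprod s = a -> (size s <= N)%N.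

End GroupDefs.

(* ---------- Garside groups ----------
   A Garside group is given as a group G together with a submonoid Pos
   (the Garside monoid G^+, embedded in G) such that G is the group of
   fractions of Pos (every element is a b^-1 with a, b in Pos), Pos is
   atomic, a lattice for both prefix and suffix orders (cancellativity is
   automatic inside a group), and Delta is a Garside element. *)
Record GarsideGroup := {
  ggrp :> Group;
  Pos : ggrp -> Prop;
  Delta : ggrp;
  Pos1 : Pos (gone ggrp);
  PosM : forall a b, Pos a -> Pos b -> Pos (gmul a b);
  Pos_fractions : forall g, exists a b, [/\ Pos a, Pos b & g = gmul a (ginv b)];
  Pos_atomic : atomic Pos;
  Pos_prefix_lattice : is_lattice Pos (prefix Pos);
  Pos_suffix_lattice : is_lattice Pos (suffix Pos);
  PosDelta : Pos Delta;
  Delta_divisors : forall a, Pos a -> (prefix Pos a Delta <-> suffix Pos a Delta);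
  Delta_finite : exists s : seq ggrp,
      forall a, Pos a -> prefix Pos a Delta -> List.In a s;
  Delta_generates : forall a, Pos a -> exists s : seq ggrp,
      (forall x, List.In x s -> Pos x /\ prefix Pos x Delta) /\ gprod s = a
}.

Section GarsideDefs.
Variable G : GarsideGroup.

Definition leL (g h : G) := @Pos G (gmul (ginv g) h).

Definition is_inf (g : G) (r : int) :=
  leL (gpow (@Delta G) r) g /\ forall s : int, leL (gpow (@Delta G) s) g -> (s <= r)%R.

Definition infG (g : G) : int := epsilon (inhabits 0%R) (is_inf g).

Definition INF_limit (g : G) (q : rat) :=
  forall eps : rat, (0 < eps)%R -> exists N : nat, forall n : nat, (N <= n)%N -> (0 < n)%N ->
    (`| (infG (gpown g n))%:~R / n%:R - q | < eps)%R.

Definition INF (g : G) : rat := epsilon (inhabits 0%R) (INF_limit g).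

Definition periodic (g : G) :=
  g = gone G \/
  exists (k l : int) (x : G), [/\ k <> 0%R, l <> 0%R &
      gpow g k = gmul (ginv x) (gmul (gpow (@Delta G) l) x)].

End GarsideDefs.

(* Main.v *)
Require Import Defs.
From HB Require Import structures.
From mathcomp Require Import all_boot all_order all_algebra.
From Stdlib Require Import ClassicalEpsilon Lia.
Import Order.TTheory GRing.Theory Num.Theory.
Set Implicit Arguments. Unset Strict Implicit. Unset Printing Implicit Defensive.

Section GroupBasics.
Variable G : Defs.Group.
Local Notation "x ⋅ y" := (@gmul G x y) (at level 40, left associativity).
Local Notation one := (@gone G).
Local Notation inv := (@ginv G).

Lemma mulgA' (x y z : G) : x ⋅ (y ⋅ z) = x ⋅ y ⋅ z. Proof. exact: gmulA. Qed.
Lemma mul1g' (x : G) : one ⋅ x = x. Proof. exact: gmul1l. Qed.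
Lemma mulg1' (x : G) : x ⋅ one = x. Proof. exact: gmul1r. Qed.
Lemma mulVg' (x : G) : inv x ⋅ x = one. Proof. exact: gmulVl. Qed.
Lemma mulgV' (x : G) : x ⋅ inv x = one. Proof. exact: gmulVr. Qed.
Lemma mulKg' (x y : G) : inv x ⋅ (x ⋅ y) = y.
Proof. by rewrite mulgA' mulVg' mul1g'. Qed.
Lemma mulKVg' (x y : G) : x ⋅ (inv x ⋅ y) = y.
Proof. by rewrite mulgA' mulgV' mul1g'. Qed.
Lemma mulgK' (x y : G) : y ⋅ x ⋅ inv x = y.
Proof. by rewrite -mulgA' mulgV' mulg1'. Qed.
Lemma mulgKV' (x y : G) : y ⋅ inv x ⋅ x = y.
Proof. by rewrite -mulgA' mulVg' mulg1'. Qed.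
Lemma mulg_injl (x y z : G) : x ⋅ y = x ⋅ z -> y = z.
Proof. by move=> h; rewrite -(mulKg' x y) h mulKg'. Qed.
Lemma mulg_injr (x y z : G) : y ⋅ x = z ⋅ x -> y = z.
Proof. by move=> h; rewrite -(mulgK' x y) h mulgK'. Qed.
Lemma inv_uniq (x y : G) : x ⋅ y = one -> y = inv x.
Proof. by move=> h; apply: (@mulg_injl x); rewrite h mulgV'. Qed.
Lemma invK' (x : G) : inv (inv x) = x.
Proof. by symmetry; apply: inv_uniq; rewrite mulVg'. Qed.
Lemma inv1' : inv one = one.
Proof. by symmetry; apply: inv_uniq; rewrite mul1g'. Qed.
Lemma invM' (x y : G) : inv (x ⋅ y) = inv y ⋅ inv x.
Proof. by symmetry; apply: inv_uniq; rewrite -mulgA' mulKVg' mulgV'. Qed.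
Lemma inv_inj (x y : G) : inv x = inv y -> x = y.
Proof. by move=> h; rewrite -(invK' x) h invK'. Qed.

Definition gcomm (x y : G) := x ⋅ y = y ⋅ x.

Lemma gcomm_sym x y : gcomm x y -> gcomm y x. Proof. by []. Qed.
Lemma gcomm1 x : gcomm x one. Proof. by rewrite /gcomm mulg1' mul1g'. Qed.
Lemma gcommM x y z : gcomm x y -> gcomm x z -> gcomm x (y ⋅ z).
Proof. by rewrite /gcomm => h1 h2; rewrite mulgA' h1 -mulgA' h2 mulgA'. Qed.
Lemma gcommV x y : gcomm x y -> gcomm x (inv y).
Proof.
rewrite /gcomm => h; apply: (@mulg_injl y); rewrite mulgA' -h -mulgA' mulgV'.
by rewrite mulKVg' mulg1'.
Qed.

Lemma gpownS (g : G) n : gpown g n.+1 = g ⋅ gpown g n. Proof. by []. Qed.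
Lemma gpown0 (g : G) : gpown g 0 = one. Proof. by []. Qed.
Lemma gpown1 (g : G) : gpown g 1 = g. Proof. by rewrite gpownS mulg1'. Qed.
Lemma gpownD (g : G) m n : gpown g (m + n) = gpown g m ⋅ gpown g n.
Proof. elim: m => [|m IH]; first by rewrite add0n mul1g'. by rewrite addSn !gpownS IH mulgA'. Qed.
Lemma gpownSr (g : G) n : gpown g n.+1 = gpown g n ⋅ g.
Proof. by rewrite -addn1 gpownD gpown1. Qed.
Lemma gcomm_pown x y n : gcomm x y -> gcomm x (gpown y n).
Proof. move=> h; elim: n => [|n IH]; first exact: gcomm1. by rewrite gpownS; apply: gcommM. Qed.
Lemma gpownM (g : G) m n : gpown g (m * n) = gpown (gpown g m) n.
Proof. elim: n => [|n IH]; first by rewrite muln0. by rewrite mulnS gpownD IH. Qed.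
Lemma gpownMc (x y : G) n : gcomm x y -> gpown (x ⋅ y) n = gpown x n ⋅ gpown y n.
Proof.
move=> h; elim: n => [|n IH]; first by rewrite !gpown0 mul1g'.
rewrite !gpownS IH. have hc : gcomm y (gpown x n) by apply: gcomm_pown; apply: gcomm_sym.
by rewrite -!mulgA' (mulgA' y) hc -!mulgA'.
Qed.
Lemma gpown_inv (g : G) n : gpown (inv g) n = inv (gpown g n).
Proof.
elim: n => [|n IH]; first by rewrite inv1'.
by rewrite gpownS gpownSr invM' IH.
Qed.
Lemma gpown_conj (w y : G) n : gpown (inv w ⋅ y ⋅ w) n = inv w ⋅ gpown y n ⋅ w.
Proof.
elim: n => [|n IH]; first by rewrite !gpown0 mulg1' mulVg'.
by rewrite !gpownS IH -!mulgA' mulKVg' !mulgA'.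
Qed.
Lemma gpown_one n : gpown one n = one.
Proof. by elim: n => // n IH; rewrite gpownS IH mul1g'. Qed.

Lemma gpowE (g : G) (m n : nat) : gpow g (m%:Z - n%:Z) = gpown g m ⋅ inv (gpown g n).
Proof.
case: (leqP n m) => h.
  rewrite subzn // /=. by rewrite -{2}(subnK h) gpownD mulgK'.
have -> : (m%:Z - n%:Z = - (n - m)%N%:Z)%R.
  rewrite -subzn. 2: exact: ltnW. by rewrite opprB.
case E: (n - m)%N => [|k]; first by move: h; rewrite -subn_gt0 E.
rewrite -NegzE. change (inv (gpown g k.+1) = gpown g m ⋅ inv (gpown g n)).
rewrite -E -{2}(subnK (ltnW h)) gpownD invM' mulKVg'. by [].
Qed.

Lemma gpow_nat (g : G) (n : nat) : gpow g n%:Z = gpown g n. Proof. by []. Qed.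

Lemma int_diff (a : int) : exists m n : nat, a = (m%:Z - n%:Z)%R.
Proof.
case: a => [m|k]; first by exists m, 0%N; rewrite subr0.
by exists 0%N, k.+1; rewrite NegzE sub0r.
Qed.

Lemma gpowD (g : G) (a b : int) : gpow g (a + b)%R = gpow g a ⋅ gpow g b.
Proof.
have [m1 [n1 ->]] := int_diff a; have [m2 [n2 ->]] := int_diff b.
have -> : (m1%:Z - n1%:Z + (m2%:Z - n2%:Z) = (m1 + m2)%N%:Z - (n1 + n2)%N%:Z)%R.
  by rewrite !PoszD opprD addrACA.
rewrite !gpowE !gpownD invM'.
have c : gcomm (gpown g m2) (inv (gpown g n1)).
  apply: gcommV; rewrite /gcomm -!gpownD; by rewrite addnC.
have c2 : gcomm (inv (gpown g n2)) (inv (gpown g n1)).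
  apply: gcommV; apply: gcomm_sym; apply: gcommV; rewrite /gcomm -!gpownD; by rewrite addnC.
rewrite -!mulgA'; congr (_ ⋅ _). by rewrite c2 !mulgA' c.
Qed.

Lemma gpowN (g : G) (a : int) : gpow g (- a)%R = inv (gpow g a).
Proof. apply: inv_uniq. by rewrite -gpowD subrr. Qed.
Lemma gpow0 (g : G) : gpow g 0 = one. Proof. by []. Qed.
Lemma gpow1 (g : G) : gpow g 1 = g. Proof. exact: gpown1. Qed.

Lemma gpowMn (g : G) (a : int) (n : nat) : gpow g (a * n%:Z)%R = gpown (gpow g a) n.
Proof.
elim: n => [|n IH]; first by rewrite mulr0.
by rewrite -addn1 PoszD mulrDr gpowD IH mulr1 gpownD gpown1.
Qed.

Lemma gpowM (g : G) (a b : int) : gpow g (a * b)%R = gpow (gpow g a) b.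
Proof.
case: b => [n|k]; first exact: gpowMn.
rewrite NegzE mulrN gpowN gpowN; congr (inv _); exact: gpowMn.
Qed.

Lemma gcomm_pow x y a : gcomm x y -> gcomm x (gpow y a).
Proof. case: a => [n|n] h; first exact: (gcomm_pown n h). exact: (gcommV (gcomm_pown n.+1 h)). Qed.

Lemma gpow_conj (w y : G) a : gpow (inv w ⋅ y ⋅ w) a = inv w ⋅ gpow y a ⋅ w.
Proof.
case: a => [n|n]; first exact: gpown_conj.
change (inv (gpown (inv w ⋅ y ⋅ w) n.+1) = inv w ⋅ inv (gpown y n.+1) ⋅ w).
by rewrite gpown_conj !invM' invK' mulgA'.
Qed.

Lemma gpowMc (x y : G) a : gcomm x y -> gpow (x ⋅ y) a = gpow x a ⋅ gpow y a.
Proof.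
move=> h; case: a => [n|n]; first exact: gpownMc.
change (inv (gpown (x ⋅ y) n.+1) = inv (gpown x n.+1) ⋅ inv (gpown y n.+1)).
rewrite gpownMc // invM'.
have h1 : gcomm y (gpown x n.+1) by apply: gcomm_pown; apply: gcomm_sym.
have h2 : gcomm (gpown x n.+1) (gpown y n.+1) by apply: gcomm_pown; apply: gcomm_sym.
have h3 : gcomm (gpown x n.+1) (inv (gpown y n.+1)) by apply: gcommV.
have h4 : gcomm (inv (gpown y n.+1)) (inv (gpown x n.+1)) by apply: gcommV; apply: gcomm_sym.
exact: h4.
Qed.

Lemma gpow_inv (g : G) a : gpow (inv g) a = inv (gpow g a).
Proof. case: a => [n|n]; first exact: gpown_inv.
change (inv (gpown (inv g) n.+1) = inv (inv (gpown g n.+1))). by rewrite gpown_inv. Qed.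

Lemma gprod_cat (s t : seq G) : gprod s ⋅ gprod t = gprod (s ++ t).
Proof. elim: s => [|x s IH] /=; first by rewrite mul1g'. by rewrite -IH mulgA'. Qed.
Lemma gprod_nseq n (x : G) : gprod (nseq n x) = gpown x n.
Proof. by elim: n => //= n ->. Qed.

End GroupBasics.

Lemma pigeon (T : Type) (L : list T) (f : nat -> T) :
  (forall j, j <= size L -> List.In (f j) L) ->
  exists i j, [/\ i < j, j <= size L & f i = f j].
Proof.
move=> Hin.
pose P j k := k < size L /\ List.nth k L (f 0) = f j.
have ex j : j <= size L -> exists k, P j k.
  move=> hj; have [k [hk e]] := List.In_nth L (f j) (f 0) (Hin j hj).
  by exists k; split=> //; apply/ssrnat.ltP.
pose g j := epsilon (inhabits 0) (P j).
have gP j : j <= size L -> P j (g j) by move=> hj; apply: epsilon_spec; exact: ex.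
have nu : ~~ uniq (map g (iota 0 (size L).+1)).
  apply/negP => u.
  have sub : {subset map g (iota 0 (size L).+1) <= iota 0 (size L)}.
    move=> x /mapP [j]; rewrite mem_iota add0n => /andP [_ hj] ->.
    by rewrite mem_iota add0n; case: (gP j hj).
  by have := uniq_leq_size u sub; rewrite size_map !size_iota ltnn.
have [i [j [hij hj e]]] := uniqPn 0 nu.
move: hj; rewrite size_map size_iota => hj.
rewrite !(nth_map 0) ?size_iota ?(ltn_trans hij) // !nth_iota ?(ltn_trans hij) // !add0n in e.
exists i, j; split=> //.
have [_ e1] := gP i (ltnW (leq_ltn_trans hij hj)).
have [_ e2] := gP j hj.
by rewrite -e1 -e2 e.
Qed.

Section Garside.
Variable G : GarsideGroup.
Local Notation "x ⋅ y" := (@gmul G x y) (at level 40, left associativity).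
Local Notation one := (@gone G).
Local Notation inv := (@ginv G).
Local Notation P := (@Pos G).
Local Notation Δ := (@Delta G).

Lemma leL_refl (a : G) : leL a a. Proof. by rewrite /leL mulVg'; exact: Pos1 G. Qed.
Lemma leL_trans (a b c : G) : leL a b -> leL b c -> leL a c.
Proof. rewrite /leL => h1 h2. have := PosM h1 h2. by rewrite -mulgA' mulKVg'. Qed.
Lemma leL_mull (g a b : G) : leL (g ⋅ a) (g ⋅ b) <-> leL a b.
Proof. by rewrite /leL invM' -mulgA' mulKg'. Qed.
Lemma leL_pos (a : G) : leL one a <-> P a. Proof. by rewrite /leL inv1' mul1g'. Qed.
Lemma prefix_leL (a b : G) : Defs.prefix P a b <-> leL a b.
Proof.
split; first by case=> c [pc ->]; rewrite /leL mulKg'.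
by move=> h; exists (inv a ⋅ b); split=> //; rewrite mulKVg'.
Qed.

Lemma posA (a : G) : P a -> P (inv a) -> a = one.
Proof.
move=> pa pi. apply: NNPP => na.
have [B HB] := Pos_atomic (Pos1 G).
pose s := flatten (nseq B.+1 [:: a; inv a]).
have hs : gprod s = one.
  rewrite /s; elim: B.+1 => //= n IH. by rewrite IH mulg1' mulgV'.
have hsz : B < size s.
  rewrite /s size_flatten /shape map_nseq /= sumn_nseq. apply/ssrnat.ltP. rewrite -multE -plusE. lia.
have hall : forall x, List.In x s -> P x /\ x <> one.
  move=> x; rewrite /s; elim: B.+1 => [|n IH] //= [<-|[<-|h]]; try by split.
    split=> // e; apply: na; by rewrite -(invK' a) e inv1'.
  exact: IH.
have := HB s hall hs. by rewrite leqNgt hsz.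
Qed.

Lemma gpown_pos (g : G) n : P g -> P (gpown g n).
Proof. move=> pg; elim: n => [|n IH]; [exact: Pos1 G | exact: PosM]. Qed.

Definition simple (a : G) := P a /\ Defs.prefix P a Δ.

Definition tau (a : G) := inv Δ ⋅ a ⋅ Δ.

Lemma tau_simple a : simple a -> simple (tau a).
Proof.
case=> pa [c [pc hc]].
have sc : Defs.suffix P c Δ by exists a.
have [_ /(_ sc) [e [pe he]]] := Delta_divisors pc.
have -> : tau a = e.
  have h1 : a ⋅ Δ = Δ ⋅ e by rewrite {1}he mulgA' -hc.
  by rewrite /tau -mulgA' h1 mulKg'.
split=> //; apply/(Delta_divisors pe); by exists c.
Qed.

Definition cj n (x : G) := inv (gpown Δ n) ⋅ x ⋅ gpown Δ n.

Lemma cjD m n x : cj (m + n) x = cj n (cj m x).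
Proof. by rewrite /cj gpownD invM' !mulgA'. Qed.
Lemma cj0 x : cj 0 x = x. Proof. by rewrite /cj gpown0 inv1' mul1g' mulg1'. Qed.
Lemma cj1 x : cj 1 x = tau x. Proof. by rewrite /cj gpown1. Qed.
Lemma cj_simple n x : simple x -> simple (cj n x).
Proof.
elim: n x => [|n IH] x hx; first by rewrite cj0.
by rewrite -addn1 cjD cj1; apply: tau_simple; apply: IH.
Qed.
Lemma cj_inj n x y : cj n x = cj n y -> x = y.
Proof. by rewrite /cj => /mulg_injr /mulg_injl. Qed.

Lemma period s : simple s -> exists p, 0 < p /\ cj p s = s.
Proof.
move=> hs. have [S HS] := Delta_finite G.
have hin : forall j, j <= size S -> List.In (cj j s) S.
  by move=> j _; case: (cj_simple j hs) => p1 p2; apply: HS.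
have [i [j [hij _ e]]] := pigeon hin.
exists (j - i); split; first by rewrite subn_gt0.
apply: (@cj_inj i); rewrite -cjD subnK; [by rewrite e | exact: ltnW].
Qed.

Lemma cj_periodM p k s : cj p s = s -> cj (p * k) s = s.
Proof. move=> h; elim: k => [|k IH]; first by rewrite muln0 cj0. by rewrite mulnS cjD h IH. Qed.

Definition pf (s : G) := epsilon (inhabits 1) (fun p => 0 < p /\ (simple s -> cj p s = s)).
Lemma pfP s : 0 < pf s /\ (simple s -> cj (pf s) s = s).
Proof.
have ex : exists p, 0 < p /\ (simple s -> cj p s = s).
  case: (classic (simple s)) => h; last by exists 1.
  have [p [p0 hp]] := period h; by exists p.
exact: (epsilon_spec (inhabits 1) _ ex).
Qed.

Definition Slist := epsilon (inhabits [::]) (fun S : seq G => forall a, P a -> Defs.prefix P a Δ -> List.In a S).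
Lemma SlistP a : simple a -> List.In a Slist.
Proof. case=> pa pr; have := epsilon_spec (inhabits [::]) _ (Delta_finite G). by move=> /(_ a pa pr). Qed.

Definition Nn := foldr (fun s acc => pf s * acc) 1 Slist.
Lemma Nn_gt0 : 0 < Nn.
Proof. rewrite /Nn; elim: Slist => //= s l IH. by rewrite muln_gt0 IH (proj1 (pfP s)). Qed.
Lemma Nn_dvd s : List.In s Slist -> exists k, Nn = pf s * k.
Proof.
rewrite /Nn; elim: Slist => //= x l IH [->|h]; first by eexists.
have [k ->] := IH h. exists (pf x * k). by rewrite mulnCA.
Qed.

Definition Dc := gpown Δ Nn.

Lemma cjN s : simple s -> cj Nn s = s.
Proof.
move=> hs; have [k ->] := Nn_dvd (SlistP hs).
apply: cj_periodM. exact: (proj2 (pfP s) hs).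
Qed.

Lemma Dc_central (g : G) : gcomm Dc g.
Proof.
have hs s : simple s -> gcomm Dc s.
  move=> h; have := cjN h; rewrite /cj -/Dc => e.
  by rewrite /gcomm -{1}e mulgA' mulKVg'.
have hp a : P a -> gcomm Dc a.
  move=> pa; have [l [hl <-]] := Delta_generates pa.
  elim: l hl => [|x l IH] hl /=; first exact: gcomm1.
  apply: gcommM; first by apply: hs; apply: hl; left.
  by apply: IH => y hy; apply: hl; right.
have [a [b [pa pb ->]]] := Pos_fractions g.
apply: gcommM; [exact: hp | apply: gcommV; exact: hp].
Qed.

Lemma Dc_pos : P Dc. Proof. exact: gpown_pos (PosDelta G). Qed.

End Garside.

Local Open Scope ring_scope.

Section Inf.
Variable G : GarsideGroup.
Local Notation "x ⋅ y" := (@gmul G x y) (at level 40, left associativity).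
Local Notation one := (@gone G).
Local Notation inv := (@ginv G).
Local Notation P := (@Pos G).
Local Notation Δ := (@Delta G).

Lemma Dc_pown_central k (g : G) : gcomm (gpown (Dc G) k) g.
Proof. apply: gcomm_sym; apply: gcomm_pown; apply: gcomm_sym; exact: Dc_central. Qed.

Lemma simple_leDc s : simple s -> exists c, P c /\ s ⋅ c = Dc G.
Proof.
case=> ps [c [pc hc]].
have [m hm] : exists m, Nn G = m.+1 by case: (Nn G) (Nn_gt0 G) => // m _; exists m.
exists (c ⋅ gpown Δ m); split; first by apply: PosM => //; apply: gpown_pos; exact: PosDelta.
by rewrite /Dc hm gpownS mulgA' -hc.
Qed.

Lemma pos_leDk b : P b -> exists k c, P c /\ b ⋅ c = gpown (Dc G) k.
Proof.
move=> pb; have [l [hl <-]] := Delta_generates pb.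
elim: l hl => [|x l IH] hl.
  by exists 0%N, one; split; [exact: Pos1 | rewrite mul1g'].
have [k [c' [pc' e']]] := IH (fun y hy => hl y (or_intror hy)).
have [c1 [pc1 e1]] := simple_leDc (hl x (or_introl erefl)).
exists k.+1, (c' ⋅ c1); split; first exact: PosM.
change ((x ⋅ gprod l) ⋅ (c' ⋅ c1) = gpown (Dc G) k.+1).
rewrite -mulgA' (mulgA' (gprod l)) e' mulgA' gpownSr.
have := Dc_pown_central k x; rewrite /gcomm => <-.
by rewrite -mulgA' e1.
Qed.

Lemma shift_pos (g : G) : exists k, P (gpown (Dc G) k ⋅ g).
Proof.
have [a [b [pa pb ->]]] := Pos_fractions g.
have [k [c [pc e]]] := pos_leDk pb.
exists k.
have h1 := Dc_pown_central k a.
have h2 : gcomm (gpown (Dc G) k) (inv b) by apply: gcommV; exact: Dc_pown_central.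
rewrite mulgA' h1 -mulgA' h2 -e mulKg'. exact: PosM.
Qed.

Lemma Dc_powE k : gpown (Dc G) k = gpow Δ ((Nn G * k)%N%:Z).
Proof. by rewrite gpow_nat /Dc gpownM. Qed.

Lemma leL_shift (a s : int) (y : G) :
  leL (gpow Δ s) y <-> leL (gpow Δ (a + s)%R) (gpow Δ a ⋅ y).
Proof. by rewrite gpowD leL_mull. Qed.

Lemma inf_lower (y : G) : exists r : int, leL (gpow Δ r) y.
Proof.
have [k pk] := shift_pos y.
exists (- (Nn G * k)%N%:Z)%R. by rewrite /leL -gpowN opprK -Dc_powE.
Qed.

Lemma inf_down (y : G) (s s' : int) : (s <= s')%R -> leL (gpow Δ s') y -> leL (gpow Δ s) y.
Proof.
move=> h hs; apply: leL_trans hs.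
rewrite /leL -gpowN -gpowD.
have [n en] : exists n : nat, (- s + s')%R = n%:Z.
  exists `|(- s + s')%R|%N; rewrite gez0_abs //. by rewrite addrC subr_ge0.
rewrite en gpow_nat; apply: gpown_pos; exact: PosDelta.
Qed.

Variable nt : exists g : G, g <> one.

Lemma Delta_ne1 : Δ <> one.
Proof.
move=> eD; case: nt => g; apply.
have hs s : simple s -> s = one.
  case=> ps [c [pc hc]]; rewrite eD in hc.
  have ec : c = inv s by apply: inv_uniq.
  apply: posA => //; by rewrite -ec.
have hp a : P a -> a = one.
  move=> pa; have [l [hl <-]] := Delta_generates pa.
  elim: l hl => [|x l IH] hl //=.
  rewrite (hs x); last first.
    by case: (hl x (or_introl erefl)) => p1 p2; split.
  by rewrite mul1g'; apply: IH => y hy; apply: hl; right.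
have [a [b [pa pb ->]]] := Pos_fractions g.
by rewrite (hp a pa) (hp b pb) inv1' mulg1'.
Qed.

Lemma gpown_Delta_ne1 n : gpown Δ n.+1 = one -> False.
Proof.
rewrite gpownS => e.
have ei : gpown Δ n = inv Δ by apply: inv_uniq.
apply: Delta_ne1; apply: posA; first exact: PosDelta.
by rewrite -ei; apply: gpown_pos; exact: PosDelta.
Qed.

Lemma Delta_pow_eq1 (t : int) : gpow Δ t = one -> t = 0%R.
Proof.
case: t => [[|n]|n] // e; exfalso.
  exact: (@gpown_Delta_ne1 n).
apply: (@gpown_Delta_ne1 n). have e' : inv (gpown Δ n.+1) = one := e. by rewrite -(invK' (gpown Δ n.+1)) e' inv1'.
Qed.

Lemma gpow_Delta_inj (a b : int) : gpow Δ a = gpow Δ b -> a = b.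
Proof.
move=> e; apply/eqP; rewrite -subr_eq0; apply/eqP; apply: Delta_pow_eq1.
by rewrite gpowD gpowN e mulgV'.
Qed.

Lemma bound_pos p : P p -> exists B, forall u : nat, leL (gpown Δ u) p -> (u <= B)%N.
Proof.
move=> pp; have [B HB] := Pos_atomic pp; exists B => u hu.
set c := inv (gpown Δ u) ⋅ p in hu.
have ep : p = gpown Δ u ⋅ c by rewrite /c mulKVg'.
pose s := nseq u Δ ++ (if excluded_middle_informative (c = one) then [::] else [:: c]).
have hsz : (u <= size s)%N by rewrite size_cat size_nseq leq_addr.
apply: (leq_trans hsz); apply: HB.
  move=> x; rewrite /s List.in_app_iff => -[].
    elim: (u) => [|v IH] //= [<-|h]; last exact: IH.
    split; [exact: PosDelta | exact: Delta_ne1].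
  by case: excluded_middle_informative => //= hc [<-|].
rewrite /s -gprod_cat gprod_nseq [RHS]ep; congr (_ ⋅ _).
by case: excluded_middle_informative => /= hc; rewrite ?mulg1' ?hc.
Qed.

Lemma inf_upper (y : G) : exists R : int, forall s : int, leL (gpow Δ s) y -> (s <= R)%R.
Proof.
have [k pk] := shift_pos y.
have [B HB] := bound_pos pk.
exists B%:Z => s hs.
have := proj1 (leL_shift ((Nn G * k)%N%:Z) s y) hs.
rewrite -Dc_powE.
case: (lerP 0 ((Nn G * k)%N%:Z + s)%R) => h.
  have [u eu] : exists u : nat, ((Nn G * k)%N%:Z + s)%R = u%:Z.
    exists `|((Nn G * k)%N%:Z + s)%R|%N. by rewrite gez0_abs.
  rewrite eu gpow_nat => /HB hu.
  have h1 : (s <= u%:Z)%R by rewrite -eu lerDr.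
  apply: (le_trans h1). by rewrite lez_nat.
move=> _; have h1 : (s < 0)%R.
  apply: le_lt_trans h; by rewrite lerDr.
by apply: (le_trans (ltW h1)).
Qed.

Lemma inf_exists (y : G) : exists r, is_inf y r.
Proof.
apply: NNPP => hn.
have hmore r : leL (gpow Δ r) y -> exists s, leL (gpow Δ s) y /\ (r < s)%R.
  move=> hr; apply: NNPP => hs; apply: hn; exists r; split=> // s hs'.
  rewrite leNgt; apply/negP => lt; apply: hs; by exists s.
have [r0 h0] := inf_lower y.
have hn' n : exists s, leL (gpow Δ s) y /\ (r0 + n%:Z <= s)%R.
  elim: n => [|n [s [hs hle]]]; first by exists r0; rewrite addr0.
  have [s' [hs' lt]] := hmore s hs.
  exists s'; split=> //. rewrite -addn1 PoszD addrA.
  apply: le_trans (_ : s + 1 <= s')%R; first by rewrite lerD2r.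
  by rewrite lezD1.
have [R HR] := inf_upper y.
have [s [hs hle]] := hn' `|(R - r0)%R|.+1%N.
have hsR := HR s hs.
have h : (r0 + `|(R - r0)%R|.+1%N%:Z <= R)%R by apply: le_trans hle hsR.
move: h; rewrite -addn1 PoszD addrA.
have h2 : (R <= r0 + `|(R - r0)%R|%N%:Z)%R.
  rewrite -lerBlDl. have := ler_norm (R - r0)%R. by rewrite -abszE.
move=> h. have h3 : r0 + `|(R - r0)%R|%N%:Z < R by rewrite -lezD1.
by have := lt_le_trans h3 h2; rewrite ltxx.
Qed.

Lemma is_inf_uniq (y : G) r1 r2 : is_inf y r1 -> is_inf y r2 -> r1 = r2.
Proof.
case=> h1 u1 [h2 u2]; apply/eqP; rewrite eq_le; apply/andP; split; [exact: u2 | exact: u1].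
Qed.

Lemma infG_spec (y : G) : is_inf y (infG y).
Proof. rewrite /infG; apply: epsilon_spec; exact: inf_exists. Qed.

Lemma infG_eq (y : G) r : is_inf y r -> infG y = r.
Proof. move=> h; apply: is_inf_uniq (infG_spec y) h. Qed.

Lemma infG_shift (a : int) (y : G) : infG (gpow Δ a ⋅ y) = a + infG y.
Proof.
apply: infG_eq; have [h u] := infG_spec y; split.
  exact: (proj1 (leL_shift a (infG y) y) h).
move=> s hs. have : leL (gpow Δ (s - a)) y.
  apply/(leL_shift a). by rewrite addrC subrK.
by move/u; rewrite lerBlDl.
Qed.

End Inf.

Definition rlim (a : nat -> rat) (q : rat) :=
  forall eps : rat, 0 < eps -> exists N : nat, forall n : nat, (N <= n)%N -> (0 < n)%N ->
    `|a n - q| < eps.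

Lemma rlim_uniq a q q' : rlim a q -> rlim a q' -> q = q'.
Proof.
move=> h h'; apply/eqP; rewrite -subr_eq0; apply/negPn/negP => nz.
have p : 0 < `|q - q'| / 2 by rewrite divr_gt0 // normr_gt0.
have [N1 H1] := h _ p; have [N2 H2] := h' _ p.
set n := (maxn N1 N2).+1.
have h1 := H1 n (leq_trans (leq_maxl _ _) (leqnSn _)) isT.
have h2 := H2 n (leq_trans (leq_maxr _ _) (leqnSn _)) isT.
have : `|q - q'| <= `|a n - q| + `|a n - q'|.
  have -> : q - q' = (a n - q') - (a n - q) by rewrite opprB [RHS]addrC addrA subrK.
  by apply: le_trans (ler_normB _ _) _; rewrite addrC.
move=> hh2.
have h3 : `|a n - q| + `|a n - q'| < `|q - q'| by have := ltrD h1 h2; rewrite -splitr.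
by have := le_lt_trans hh2 h3; rewrite ltxx.
Qed.

Lemma rlim_bounded (a : nat -> rat) (q C : rat) :
  (forall n, (0 < n)%N -> `|a n * n%:R - n%:R * q| <= C) -> rlim a q.
Proof.
move=> hb e e0.
have C0 : 0 <= C by apply: le_trans (hb 1%N isT); exact: normr_ge0.
exists (Num.Def.archi_bound (C / e)) => n hn n0.
have nq : 0 < n%:R :> rat by rewrite ltr0n.
have hC := archi_boundP (divr_ge0 C0 (ltW e0)).
have : C / e < n%:R by apply: lt_le_trans hC _; rewrite ler_nat.
rewrite ltr_pdivrMr // => hCe.
have e2 : a n * n%:R - n%:R * q = (a n - q) * n%:R by rewrite mulrBl [q * _]mulrC.
have e1 : `|a n - q| = `|a n * n%:R - n%:R * q| / n%:R.
  by rewrite e2 normrM (ger0_norm (ltW nq)) mulfK ?gt_eqF.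
rewrite e1 ltr_pdivrMr //. apply: le_lt_trans (hb n n0) _. by rewrite mulrC.
Qed.

Section INFsec.
Variable G : GarsideGroup.
Local Notation "x ⋅ y" := (@gmul G x y) (at level 40, left associativity).
Local Notation one := (@gone G).
Local Notation inv := (@ginv G).
Local Notation P := (@Pos G).
Local Notation Δ := (@Delta G).

Lemma INF_rlim (x : G) q : rlim (fun n => (infG (gpown x n))%:~R / n%:R) q -> INF x = q.
Proof.
move=> h; have hI : INF_limit x (INF x) by rewrite /INF; apply: epsilon_spec; exists q; exact: h.
exact: (rlim_uniq hI h).
Qed.

Lemma INF_bounded (x : G) (q C : rat) :
  (forall n, (0 < n)%N -> `|(infG (gpown x n))%:~R - n%:R * q| <= C) -> INF x = q.
Proof.
move=> hb; apply: INF_rlim; apply: (rlim_bounded (C := C)) => n n0.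
by rewrite mulfVK ?pnatr_eq0 -?lt0n //; apply: hb.
Qed.

End INFsec.

Section Per.
Variable G : GarsideGroup.
Local Notation "x ⋅ y" := (@gmul G x y) (at level 40, left associativity).
Local Notation one := (@gone G).
Local Notation inv := (@ginv G).
Local Notation P := (@Pos G).
Local Notation Δ := (@Delta G).
Local Notation D := (Dc G).
Local Notation N := (Nn G).

Lemma Dpow_central a (g : G) : gcomm (gpow D a) g.
Proof. apply: gcomm_sym; apply: gcomm_pow; apply: gcomm_sym; exact: Dc_central. Qed.

Lemma Dc_gpow a : gpow D a = gpow Δ (N%:Z * a).
Proof. by rewrite gpowM. Qed.

Variable nt : exists g : G, g <> one.

Lemma infG_Dc a (y : G) : infG (gpow D a ⋅ y) = N%:Z * a + infG y.
Proof. by rewrite Dc_gpow infG_shift. Qed.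

Lemma INF_eq (x : G) (K : nat) (T : int) :
  (0 < K)%N -> gpown x K = gpow D T ->
  INF x = (N%:Z * T)%:~R / K%:R.
Proof.
move=> K0 hK.
set A := (N%:Z * T).
set q := A%:~R / K%:R.
have Kq : K%:R * q = A%:~R by rewrite /q mulrC divfK // pnatr_eq0 -lt0n.
pose F (r : 'I_K) := `|(infG (gpown x r))%:~R - r%:R * q|.
apply: (INF_bounded (C := \sum_(r < K) F r)) => n n0.
have hr : (n %% K < K)%N by rewrite ltn_pmod.
set m := (n %/ K)%N; set r := (n %% K)%N.
have en : n = (m * K + r)%N by rewrite /m /r -divn_eq.
have ex : gpown x n = gpow D (T * m%:Z) ⋅ gpown x r.
  by rewrite {1}en gpownD mulnC gpownM hK gpowMn.
have ei : infG (gpown x n) = A * m%:Z + infG (gpown x r) by rewrite ex infG_Dc mulrA.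
have -> : (infG (gpown x n))%:~R - n%:R * q = (infG (gpown x r))%:~R - r%:R * q.
  rewrite ei en intrD intrM natrD natrM mulrDl -mulrA Kq [m%:R * _]mulrC.
  by rewrite [_%:~R * _ + _]addrC addrKA.
rewrite (bigD1 (Ordinal hr)) //= lerDl. by apply: sumr_ge0 => i _; exact: normr_ge0.
Qed.

Lemma per_pow (x : G) : periodic x ->
  exists K T, [/\ (0 < K)%N, gpown x K = gpow D T & (x <> one -> T <> 0)].
Proof.
case=> [->|[k [l [w [k0 l0 e]]]]].
  by exists 1%N, 0; split=> //; rewrite gpown1.
have [n [l' [n0 l'0 e']]] : exists (n : nat) (l' : int),
    [/\ (0 < n)%N, l' <> 0 & gpown x n = inv w ⋅ gpow Δ l' ⋅ w].
  case: k k0 e => [n|n] k0 e.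
    exists n, l; split=> //; last by rewrite -mulgA'.
    by rewrite lt0n; apply/eqP => e0; apply: k0; rewrite e0.
  exists n.+1, (- l); split=> //; first by move/eqP; rewrite oppr_eq0 => /eqP.
  have e2 : inv (gpown x n.+1) = inv w ⋅ (gpow Δ l ⋅ w) := e.
  by rewrite gpowN -(invK' (gpown x n.+1)) e2 !invM' invK'.
exists (n * N)%N, l'; split.
- by rewrite muln_gt0 n0 Nn_gt0.
- rewrite gpownM e' gpown_conj -gpowMn mulrC -Dc_gpow.
  have hc := Dpow_central l' w; rewrite /gcomm in hc. by rewrite -mulgA' hc mulKg'.
- by [].
Qed.

End Per.

Lemma floor_add (a b K : int) : 0 < K ->
  (divz a K) + (divz b K) <= (divz (a + b) K) <= (divz a K) + (divz b K) + 1.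
Proof.
move=> K0; have K0' : K != 0 by rewrite gt_eqF.
have e : a + b = ((divz a K) + (divz b K)) * K + ((modz a K) + (modz b K)).
  rewrite {1}(divz_eq a K) {1}(divz_eq b K) mulrDl.
  by rewrite addrACA.
rewrite e divzMDl //.
have ha := modz_ge0 a K0'; have hb := modz_ge0 b K0'.
have la := ltz_pmod a K0; have lb := ltz_pmod b K0.
have h0 : 0 <= (divz ((modz a K) + (modz b K)) K) by rewrite divz_ge0 // addr_ge0.
have h1 : (divz ((modz a K) + (modz b K)) K) <= 1.
  case: (ltrP ((modz a K) + (modz b K)) K) => h.
    rewrite divz_small //; apply/andP; split; first exact: addr_ge0.
    by rewrite gtz0_abs.
  have -> : (modz a K) + (modz b K) = 1 * K + ((modz a K) + (modz b K) - K) by rewrite mul1r [RHS]addrC subrK.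
  rewrite divzMDl // divz_small ?addr0 //; apply/andP; split; first by rewrite subr_ge0.
  rewrite gtz0_abs // ltrBlDr. by rewrite ltrD.
by rewrite lerDl h0 /= lerD2l.
Qed.

Section Meet.
Variable G : GarsideGroup.
Local Notation "x ⋅ y" := (@gmul G x y) (at level 40, left associativity).
Local Notation one := (@gone G).
Local Notation inv := (@ginv G).
Local Notation P := (@Pos G).
Local Notation Δ := (@Delta G).
Local Notation D := (Dc G).
Local Notation N := (Nn G).

Lemma posmeet (a b : G) : P a -> P b -> exists m, [/\ P m, leL m a, leL m b &
  forall c, P c -> leL c a -> leL c b -> leL c m].
Proof.
move=> pa pb; have [[m [pm h1 h2 h3]] _] := Pos_prefix_lattice pa pb.
exists m; split=> //; try by apply/prefix_leL.
by move=> c pc /prefix_leL hc1 /prefix_leL hc2; apply/prefix_leL; apply: h3.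
Qed.

Lemma Dk_pos k : P (gpown D k). Proof. apply: gpown_pos; exact: Dc_pos. Qed.

Lemma posmeet_univ (a b : G) : P a -> P b -> exists m, [/\ P m, leL m a, leL m b &
  forall c, leL c a -> leL c b -> leL c m].
Proof.
move=> pa pb; have [m [pm h1 h2 h3]] := posmeet pa pb.
exists m; split=> // c hca hcb.
have [u pu] := shift_pos c.
set Du := gpown D u.
have pDa : P (Du ⋅ a) by apply: PosM => //; exact: Dk_pos.
have pDb : P (Du ⋅ b) by apply: PosM => //; exact: Dk_pos.
have [e [pe he1 he2 he3]] := posmeet pDa pDb.
have hce : leL (Du ⋅ c) e by apply: he3 => //; apply/leL_mull.
have hDe : leL Du e.
  apply: he3; first exact: Dk_pos.
    by rewrite -{1}(mulg1' Du); apply/leL_mull/leL_pos.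
  by rewrite -{1}(mulg1' Du); apply/leL_mull/leL_pos.
set e' := inv Du ⋅ e.
have ee : e = Du ⋅ e' by rewrite /e' mulKVg'.
have pe' : P e' := hDe.
have he'm : leL e' m.
  apply: h3 => //.
    by apply/(leL_mull Du); rewrite -ee.
  by apply/(leL_mull Du); rewrite -ee.
apply/(leL_mull Du); apply: leL_trans hce _. rewrite ee. by apply/leL_mull.
Qed.

Lemma gmeet (a b : G) : exists m, [/\ leL m a, leL m b &
  forall c, leL c a -> leL c b -> leL c m].
Proof.
have [k pk] := shift_pos a; have [k' pk'] := shift_pos b.
set t := (k' + k)%N.
have pa : P (gpown D t ⋅ a) by rewrite /t gpownD -mulgA'; apply: PosM => //; exact: Dk_pos.
have pb : P (gpown D t ⋅ b) by rewrite /t addnC gpownD -mulgA'; apply: PosM => //; exact: Dk_pos.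
have [m0 [_ h1 h2 h3]] := posmeet_univ pa pb.
exists (inv (gpown D t) ⋅ m0); split.
- by apply/(leL_mull (gpown D t)); rewrite mulKVg'.
- by apply/(leL_mull (gpown D t)); rewrite mulKVg'.
- move=> c hca hcb; apply/(leL_mull (gpown D t)); rewrite mulKVg'.
  by apply: h3; apply/leL_mull.
Qed.

Lemma listmeet (z : nat -> G) (K : nat) : (0 < K)%N -> exists m,
  (forall i, (i < K)%N -> leL m (z i)) /\
  (forall c, (forall i, (i < K)%N -> leL c (z i)) -> leL c m).
Proof.
case: K => // K _; elim: K => [|K [m [h1 h2]]].
  exists (z 0%N); split; first by case=> // _; exact: leL_refl.
  by move=> c /(_ 0%N isT).
have [m' [hm1 hm2 hm3]] := gmeet m (z K.+1).
exists m'; split.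
  move=> i; rewrite ltnS leq_eqVlt => /orP [/eqP ->|hi] //.
  by apply: leL_trans hm1 (h1 i hi).
move=> c hc; apply: hm3; last exact: hc.
by apply: h2 => i hi; apply: hc; apply: ltnW.
Qed.

Definition BDc := epsilon (inhabits 0%N) (fun B : nat => forall s : seq G,
    (forall x, List.In x s -> P x /\ x <> one) -> gprod s = D -> (size s <= B)%N).

Lemma BDcP s : (forall x, List.In x s -> P x /\ x <> one) -> gprod s = D -> (size s <= BDc)%N.
Proof.
have := epsilon_spec (inhabits 0%N) _ (Pos_atomic (Dc_pos G)).
by move=> h; apply: h.
Qed.

Fixpoint lists (S : seq G) (n : nat) : seq (seq G) :=
  match n with
  | 0%N => [:: [::]]
  | n'.+1 => [::] :: List.flat_map (fun x => map (cons x) (lists S n')) S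
  end.

Lemma lists_in (S : seq G) n (l : seq G) : (size l <= n)%N -> (forall x, List.In x l -> List.In x S) ->
  List.In l (lists S n).
Proof.
elim: n l => [|n IH] [|x l] //=; try by left.
move=> hs hin; right; apply/List.in_flat_map; exists x; split; first by apply: hin; left.
apply: List.in_map; apply: IH => // y hy; apply: hin; right; exact: hy.
Qed.

Definition Ldiv := map (@gprod G) (lists (Slist G) BDc).

Lemma nontriv_list (l : seq G) : (forall x, List.In x l -> simple x) ->
  exists l', gprod l' = gprod l /\ (forall x, List.In x l' -> simple x /\ x <> one).
Proof.
elim: l => [|x l IH] hl; first by exists [::].
have [l' [e hl']] := IH (fun y hy => hl y (or_intror hy)).
case: (classic (x = one)) => hx.
  exists l'; split; last by [].
  by rewrite e; change (gprod l = x ⋅ gprod l); rewrite hx mul1g'.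
exists (x :: l'); split; first by change (x ⋅ gprod l' = x ⋅ gprod l); rewrite e.
move=> y [<-|hy]; last exact: hl'.
by split=> //; apply: hl; left.
Qed.

Lemma Ldiv_in a : P a -> leL a D -> List.In a Ldiv.
Proof.
move=> pa hD.
have [la [hla ea]] := Delta_generates pa.
have [lc [hlc ec]] := Delta_generates hD.
have [la' [ea' hla']] := nontriv_list (fun x hx => hla x hx).
have [lc' [ec' hlc']] := nontriv_list (fun x hx => hlc x hx).
have hsz := BDcP (s := la' ++ lc') _ _.
rewrite /Ldiv -ea -ea'; apply: List.in_map; apply: lists_in.
  apply: leq_trans (hsz _ _); first by rewrite size_cat leq_addr.
    move=> x; rewrite List.in_app_iff => -[hx|hx].
      by case: (hla' x hx) => [[p1 _] p2].
    by case: (hlc' x hx) => [[p1 _] p2].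
  by rewrite -gprod_cat ea' ea ec' ec mulKVg'.
by move=> x hx; apply: SlistP; case: (hla' x hx).
Qed.

End Meet.

Section DB.
Variable G : GarsideGroup.
Local Notation "x ⋅ y" := (@gmul G x y) (at level 40, left associativity).
Local Notation one := (@gone G).
Local Notation inv := (@ginv G).
Local Notation P := (@Pos G).
Local Notation Δ := (@Delta G).
Local Notation D := (Dc G).
Local Notation N := (Nn G).

Lemma Dcomm a (g : G) : gpow D a ⋅ g = g ⋅ gpow D a.
Proof. exact: Dpow_central. Qed.

Lemma Dpow_pos (a : int) : 0 <= a -> P (gpow D a).
Proof.
move=> a0; have -> : a = `|a|%N%:Z by rewrite gez0_abs.
rewrite gpow_nat; exact: Dk_pos.
Qed.

Lemma Dle (a b : int) (w : G) : a <= b -> leL (gpow D a ⋅ w) (gpow D b ⋅ w).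
Proof.
move=> h; rewrite /leL invM' -gpowN -mulgA' (mulgA' (gpow D (- a))) -gpowD.
rewrite (Dcomm _ w) mulKg'. by apply: Dpow_pos; rewrite addrC subr_ge0.
Qed.

Variables (x : G) (K : nat) (L : int).
Hypothesis K0 : (0 < K)%N.
Hypothesis hK : gpown x K = gpow D L.

Let Kz0 : 0 < K%:Z. Proof. by rewrite ltz_nat. Qed.
Let Kz0' : K%:Z != 0. Proof. by rewrite gt_eqF. Qed.

Definition fl (j : nat) : int := divz (j%:Z * L) K%:Z.
Definition zz (j : nat) : G := gpow D (- fl j) ⋅ gpown x j.

Lemma fl_K j : fl (j + K) = fl j + L.
Proof.
by rewrite /fl PoszD mulrDl addrC [K%:Z * L]mulrC divzMDl // addrC.
Qed.

Lemma fl_add j k : fl j + fl k <= fl (j + k) <= fl j + fl k + 1.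
Proof. rewrite /fl PoszD mulrDl. exact: floor_add. Qed.

Lemma zz_K j : zz (j + K) = zz j.
Proof.
rewrite /zz fl_K gpownD hK -(Dcomm L) mulgA' -gpowD.
by rewrite opprD subrK.
Qed.

Lemma zz_Kc j c : zz (j + K * c) = zz j.
Proof.
elim: c => [|c IH]; first by rewrite muln0 addn0.
by rewrite mulnS addnCA addnC zz_K IH.
Qed.

Lemma zz_mod n : zz n = zz (n %% K).
Proof. by rewrite {1}(divn_eq n K) mulnC addnC zz_Kc. Qed.

Lemma x_zz j k : gpown x j ⋅ zz k = gpow D (fl (j + k) - fl k) ⋅ zz (j + k).
Proof.
rewrite /zz mulgA' -(Dcomm (- fl k)) -mulgA' -gpownD.
rewrite mulgA' -gpowD. by rewrite addrAC subrr add0r.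
Qed.

Lemma DB_conj : exists e t, [/\ (0 < e)%N, (e <= size (Ldiv G))%N & gpown x e = gpow D t].
Proof.
have [m [hm1 hm2]] := listmeet zz K0.
have L1 n : leL m (zz n) by rewrite zz_mod; apply: hm1; rewrite ltn_pmod.
have L2 j : leL (gpow D (fl j) ⋅ m) (gpown x j ⋅ m).
  apply/(leL_mull (inv (gpown x j))); rewrite mulKg'.
  apply: hm2 => k _.
  apply/(leL_mull (gpown x j)); rewrite mulKVg' x_zz.
  apply: leL_trans (_ : leL _ (gpow D (fl j) ⋅ zz (j + k))) _.
    by apply/leL_mull.
  apply: Dle. have /andP [h _] := fl_add j k. by rewrite lerBrDr.
have L3 j : leL (gpown x j ⋅ m) (gpow D (fl j + 1) ⋅ m).
  apply/(leL_mull (gpow D (- (fl j + 1)))); rewrite [gpow D _ ⋅ (gpow D _ ⋅ m)]mulgA' -gpowD addNr gpow0 mul1g'.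
  apply: hm2 => k _.
  set n := (k + K.-1 * j)%N.
  have en : (j + n = k + K * j)%N.
    by rewrite /n -[in RHS](prednK K0) mulSn addnCA.
  apply: leL_trans (_ : leL _ (gpow D (- (fl j + 1)) ⋅ (gpown x j ⋅ zz n))) _.
    by apply/leL_mull; apply/leL_mull.
  rewrite x_zz en zz_Kc mulgA' -gpowD -{2}(mul1g' (zz k)) -(gpow0 D).
  apply: Dle. rewrite -en.
  have /andP [_ h] := fl_add j n.
  by rewrite addrC subr_le0 lerBlDr addrAC.
set y := inv m ⋅ x ⋅ m.
have ey j : gpown y j = inv m ⋅ gpown x j ⋅ m by rewrite /y gpown_conj.
pose w j := gpow D (- fl j) ⋅ gpown y j.
have Pw j : P (w j).
  have := L2 j. rewrite /leL invM' -gpowN.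
  have -> : inv m ⋅ gpow D (- fl j) ⋅ (gpown x j ⋅ m) = w j.
    by rewrite /w ey -(Dcomm _ (inv m)) !mulgA'.
  by [].
have Lw j : leL (w j) D.
  have := L3 j. rewrite /leL.
  have -> : inv (gpown x j ⋅ m) ⋅ (gpow D (fl j + 1) ⋅ m) = inv (w j) ⋅ D.
    rewrite /w ey !invM' invK' -gpowN opprK gpowD gpow1.
    have c1 : gpow D (fl j) ⋅ D ⋅ m = m ⋅ (gpow D (fl j) ⋅ D).
      have DC : D ⋅ m = m ⋅ D := Dc_central m.
      by rewrite -mulgA' DC mulgA' (Dcomm _ m) -mulgA'.
    by rewrite c1 !mulgA'.
  by [].
have hin j : (j <= size (Ldiv G))%N -> List.In (w j) (Ldiv G).
  by move=> _; apply: Ldiv_in; [exact: Pw | exact: Lw].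
have [i [j [hij hj e]]] := pigeon hin.
exists (j - i)%N, (fl j - fl i); split.
- by rewrite subn_gt0.
- by apply: leq_trans (leq_subr _ _) hj.
have ej : gpown y j = gpown y i ⋅ gpown y (j - i) by rewrite -gpownD subnKC // ltnW.
have ey2 : gpown y (j - i) = gpow D (fl j - fl i).
  move: e; rewrite /w ej => e.
  apply: (@mulg_injl _ (gpown y i)).
  rewrite -(Dcomm _ (gpown y i)).
  have : gpow D (fl j) ⋅ (gpow D (- fl i) ⋅ gpown y i) =
         gpow D (fl j) ⋅ (gpow D (- fl j) ⋅ (gpown y i ⋅ gpown y (j - i))) by rewrite e.
  rewrite !mulgA' -!gpowD subrr gpow0 mul1g' => ->. by [].
have h := ey (j - i)%N; rewrite ey2 in h.
apply: (@mulg_injl _ (inv m)); apply: (@mulg_injr _ m). rewrite -h.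
by rewrite -mulgA' (Dcomm _ m) mulKg'.
Qed.

End DB.

Section Main.
Variable G : GarsideGroup.
Local Notation "x ⋅ y" := (@gmul G x y) (at level 40, left associativity).
Local Notation one := (@gone G).
Local Notation inv := (@ginv G).
Local Notation P := (@Pos G).
Local Notation Δ := (@Delta G).
Local Notation D := (Dc G).
Local Notation N := (Nn G).

Variable H : G -> Prop.
Hypotheses (H1 : H one) (HM : forall x y, H x -> H y -> H (x ⋅ y))
  (HV : forall x, H x -> H (inv x)) (Habel : forall x y, H x -> H y -> x ⋅ y = y ⋅ x)
  (Hper : forall x, H x -> periodic x).

Lemma H_gpown c n : H c -> H (gpown c n).
Proof. move=> hc; elim: n => [|n IH] //; rewrite gpownS; exact: HM. Qed.
Lemma H_gpow c k : H c -> H (gpow c k).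
Proof. move=> hc; case: k => [n|n]; first exact: H_gpown. by apply: HV; apply: H_gpown. Qed.

Section NonTriv.
Variable nt : exists g : G, g <> one.

Lemma INF_eqK (x : G) (K : nat) (T : int) :
  (0 < K)%N -> gpown x K = gpow D T -> INF x * K%:R = (N%:Z * T)%:~R.
Proof.
move=> K0 hK; rewrite (INF_eq nt K0 hK). by rewrite divfK // pnatr_eq0 -lt0n.
Qed.

Lemma per_INF (x : G) : H x -> exists K T, [/\ (0 < K)%N, gpown x K = gpow D T,
  INF x * K%:R = (N%:Z * T)%:~R & (x <> one -> T <> 0)].
Proof.
move=> hx; have [K [T [K0 hK hT]]] := per_pow (Hper hx).
exists K, T; split=> //; exact: INF_eqK.
Qed.

Lemma P1 x y : H x -> H y -> INF (x ⋅ y) = INF x + INF y.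
Proof.
move=> hx hy.
have [Kx [Tx [Kx0 hKx ex _]]] := per_INF hx.
have [Ky [Ty [Ky0 hKy ey _]]] := per_INF hy.
have hxy : gpown (x ⋅ y) (Kx * Ky) = gpow D (Tx * Ky%:Z + Ty * Kx%:Z).
  rewrite gpownMc; last exact: Habel.
  rewrite gpownM hKx [(Kx * Ky)%N]mulnC gpownM hKy -!gpowMn -gpowD. by [].
have K0 : (0 < Kx * Ky)%N by rewrite muln_gt0 Kx0.
have exy := INF_eqK K0 hxy.
have nz : (Kx * Ky)%:R != 0 :> rat by rewrite pnatr_eq0 -lt0n.
apply: (mulIf nz); rewrite exy mulrDl natrM.
rewrite mulrA ex [Kx%:R * _]mulrC mulrA ey.
by rewrite mulrDr intrD !intrM !mulrA.
Qed.

Lemma INF1 : INF one = 0.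
Proof.
have := P1 H1 H1; rewrite mul1g' => e.
by apply: (addrI (INF one)); rewrite addr0 -e.
Qed.

Lemma INF_inv x : H x -> INF (inv x) = - INF x.
Proof.
move=> hx; have := P1 hx (HV hx); rewrite mulgV' INF1 => e.
by apply/eqP; rewrite -addr_eq0 addrC -e.
Qed.

Lemma P2 x y : H x -> H y -> INF x = INF y -> x = y.
Proof.
move=> hx hy e.
have hz : H (x ⋅ inv y) by apply: HM => //; exact: HV.
have ez : INF (x ⋅ inv y) = 0 by rewrite P1 ?INF_inv ?e ?subrr //; exact: HV.
case: (classic (x ⋅ inv y = one)) => h.
  by apply: (@mulg_injr _ (inv y)); rewrite h mulgV'.
exfalso; have [K [T [K0 hK eK hT]]] := per_INF hz.
apply: (hT h); move: eK; rewrite ez mul0r => /esym/eqP.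
rewrite intr_eq0 mulf_eq0 => /orP [|/eqP //].
by rewrite eqz_nat; have := Nn_gt0 G; rewrite lt0n => /negPf ->.
Qed.

Definition Qf := ((size (Ldiv G))`!)%N.

Lemma Qint x : H x -> exists z : int, INF x * Qf%:R = z%:~R.
Proof.
move=> hx; have [K [T [K0 hK _]]] := per_pow (Hper hx).
have [e [t [e0 eB he]]] := DB_conj K0 hK.
have ee := INF_eqK e0 he.
have [c ec] : exists c, Qf = (e * c)%N.
  have : (e %| Qf)%N by rewrite /Qf dvdn_fact // e0.
  by case/dvdnP => c ->; exists c; rewrite mulnC.
exists (N%:Z * t * c%:Z); rewrite ec natrM mulrA ee.
by rewrite [RHS]intrM.
Qed.

Lemma INF_gpown c n : H c -> INF (gpown c n) = n%:R * INF c.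
Proof.
move=> hc; elim: n => [|n IH]; first by rewrite mul0r INF1.
rewrite gpownS P1 //; last exact: H_gpown.
by rewrite IH -addn1 natrD mulrDl mul1r addrC.
Qed.

Lemma INF_gpow c k : H c -> INF (gpow c k) = k%:~R * INF c.
Proof.
move=> hc; case: k => [n|n]; first exact: INF_gpown.
change (INF (inv (gpown c n.+1)) = (Negz n)%:~R * INF c).
by rewrite INF_inv ?INF_gpown ?NegzE ?mulNr //; apply: H_gpown.
Qed.

Lemma P3 : exists c, H c /\ forall x, H x -> exists k : int, x = gpow c k.
Proof.
case: (classic (forall x, H x -> x = one)) => hall.
  exists one; split=> // x hx; exists 0; by rewrite (hall x hx).
have [x0 [hx0 nx0]] : exists x0, H x0 /\ x0 <> one.
  by apply: NNPP => hn; apply: hall => x hx; apply: NNPP => nx; apply: hn; exists x.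
pose Pn n := (0 < n)%N /\ exists c, H c /\ INF c * Qf%:R = n%:R.
have Qf0 : Qf%:R != 0 :> rat by rewrite pnatr_eq0 -lt0n /Qf fact_gt0.
have exn : exists n, Pn n.
  have [z ez] := Qint hx0.
  have z0 : z != 0.
    apply/eqP => z0; apply: nx0; apply: P2 => //; rewrite INF1.
    by apply/eqP; rewrite -(mulIr_eq0 _ (mulIf Qf0)) ez z0.
  case: (ltrP 0 z) => hz.
    exists `|z|%N; split; first by rewrite absz_gt0.
    by exists x0; split=> //; rewrite ez -[in LHS](gez0_abs (ltW hz)).
  exists `|z|%N; split; first by rewrite absz_gt0.
  exists (inv x0); split; first exact: HV.
  rewrite INF_inv // mulNr ez.
  have -> : `|z|%N%:R = (`|z|%N%:Z)%:~R :> rat by [].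
  by rewrite lez0_abs // intrN.
pose b n := if excluded_middle_informative (Pn n) then true else false.
have bP n : b n = true <-> Pn n by rewrite /b; case: excluded_middle_informative.
have exb : exists n, b n by case: exn => n hn; exists n; apply/bP.
case: (ex_minnP exb) => n0 /bP [n00 [c [hc ec]]] hmin.
exists c; split=> // x hx.
have [zx ezx] := Qint hx.
set k := divz zx n0%:Z.
exists k.
set y := x ⋅ inv (gpow c k).
have hy : H y by apply: HM => //; apply: HV; apply: H_gpow.
have ey : INF y * Qf%:R = (modz zx n0%:Z)%:~R.
  rewrite /y P1 //; last by apply: HV; apply: H_gpow.
  rewrite INF_inv; last exact: H_gpow.
  rewrite INF_gpow // mulrDl ezx mulNr -mulrA ec.
  rewrite {1}(divz_eq zx n0%:Z) intrD intrM. by rewrite addrAC subrr add0r.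
have r0 : modz zx n0%:Z = 0.
  apply: NNPP => nr.
  have n0z : n0%:Z != 0 by rewrite eqz_nat -lt0n.
  have n0p : 0 < n0%:Z by rewrite ltz_nat.
  have rge := modz_ge0 zx n0z.
  have rlt := ltz_pmod zx n0p.
  have [r er] : exists r : nat, modz zx n0%:Z = r%:Z by exists `|modz zx n0%:Z|%N; rewrite gez0_abs.
  have : (n0 <= r)%N.
    apply: hmin; apply/bP; split.
      by rewrite lt0n; apply/eqP => r0'; apply: nr; rewrite er r0'.
    by exists y; split=> //; rewrite ey er.
  by rewrite leqNgt -ltz_nat -er rlt.
have : INF y = INF one.
  rewrite INF1; apply/eqP; rewrite -(mulIr_eq0 _ (mulIf Qf0)) ey r0. by [].
move/(P2 hy H1) => e1.
by rewrite -(mulgKV' (gpow c k) x) -/y e1 mul1g'.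
Qed.

End NonTriv.
End Main.

Lemma INF_triv (G : GarsideGroup) : (forall g : G, g = gone G) -> forall x : G, INF x = 0%R.
Proof.
move=> all x; apply: (INF_bounded (C := `|(infG (gone G))%:~R|%R)) => n _.
by rewrite (all (gpown x n)) mulr0 subr0.
Qed.

Local Close Scope ring_scope.
Unset Implicit Arguments.
Theorem mainTheorem8 (G : GarsideGroup) (H : G -> Prop)
  (H1 : H (gone G))
  (HM : forall x y, H x -> H y -> H (gmul x y))
  (HV : forall x, H x -> H (ginv x))
  (Habel : forall x y, H x -> H y -> gmul x y = gmul y x)
  (Hper : forall x, H x -> periodic x) :
  (forall x y, H x -> H y -> INF (gmul x y) = (INF x + INF y)%R) /\
  (forall x y, H x -> H y -> INF x = INF y -> x = y) /\
  (exists c, H c /\ forall x, H x -> exists k : int, x = gpow c k).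
Proof.
case: (classic (exists g : G, g <> gone G)) => nt.
  split; first by move=> x y hx hy; eapply P1; eauto.
  split; first by move=> x y hx hy e; eapply P2; eauto.
  by eapply P3; eauto.
have all : forall g : G, g = gone G.
  by move=> g; apply: NNPP => ng; apply: nt; exists g.
have I0 := @INF_triv G all.
split; first by move=> x y _ _; rewrite !I0 addr0.
split; first by move=> x y _ _ _; rewrite (all x) (all y).
by exists (gone G); split=> // x _; exists 0%R; rewrite (all x).
Qed.
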